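(* Let $U$ be an $N\times N$ unitary matrix with no zero entries, let $S,T$ be $N\times N$ enphased permutation matrices, let $V=SUT^{-1}$, and let $\Pi_S,\Pi_T$ be the permutation matrices with $S=D_S\Pi_S$, $T=D_T\Pi_T$ for unitary diagonal $D_S,D_T$. Then $\mathbf D(U)=\mathbf D(V)$, i.e. the multiplicities of the eigenvalue $1$ in the spectra of $\mathcal I_U$ and $\mathcal I_V$ are equal. Moreover $\mathbb V_V(1)=\Phi_{\Pi_S,\Pi_T}(\mathbb V_U(1))$, $\mathrm{Im}\,\mathbb V_V(1)=\Phi_{\Pi_S,\Pi_T}(\mathrm{Im}\,\mathbb V_U(1))$, and $\mathcal F_V=\Phi_{S,T}(\mathcal F_U)$.
   Context: An enphased permutation matrix is a product of a permutation matrix and a unitary diagonal matrix (factorization $D\Pi$ is unique). $\circ$ is the entrywise product. For unitary $W$ with no zero entries: $\mathcal C_W(F)=(F\circ W)W^*$, $\mathcal D_W(F)=W(\overline F\circ W)^*$, $\mathcal I_W=\mathcal C_W^{-1}\mathcal D_W$ (operators on $\mathbb C^{N\times N}$); $\mathbb V_W(\lambda)$ is the complex eigenspace of $\mathcal I_W$ for eigenvalue $\lambda$, and $\mathrm{Im}\,\mathbb V_W(\lambda)$ is the real space of purely imaginary matrices in $\mathbb V_W(\lambda)$. The feasible space is $\mathcal F_W=\{iR\circ W:\ R \text{ real } N\times N,\ (iR\circ W)W^* \text{ antihermitian}\}$ (equivalently, the intersection of the tangent spaces at $W$ to the unitary group and to the manifold of matrices whose entries have the same moduli as those of $W$), and the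 undephased defect is $\mathbf D(W)=\dim_{\mathbb R}\mathcal F_W$. $\Phi_{A,B}$ denotes the operator $X\mapsto AXB^{-1}$. *)

(* Defs.v *)
(* Complex numbers are modelled as C := R[i] = complex R
   for an arbitrary real closed field R (mathcomp-real-closed); this
   includes the genuine complex numbers (R = the reals). *)
From HB Require Import structures.
From mathcomp Require Import all_boot all_order all_algebra all_fingroup.
From mathcomp Require Import complex.

Set Implicit Arguments.
Unset Strict Implicit.
Unset Printing Implicit Defensive.

Import Order.TTheory GRing.Theory Num.Theory.
Local Open Scope ring_scope.

Section Defs.
Variable R : rcfType.
Local Notation C := (complex R).
Variable N : nat.
Local Notation M := 'M[C]_N.

Definition adjmx (W : M) : M := (map_mx Num.conj W)^T.

Definition hadamard (A B : M) : M := \matrix_(i, j) (A i j * B i j).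

Definition unitary (W : M) : Prop :=
  adjmx W *m W = 1%:M /\ W *m adjmx W = 1%:M.

Definition no_zero_entries (W : M) : Prop := forall i j, W i j != 0.

(* unitary diagonal matrix diag(d), d of unit-modulus entries *)
Definition unit_moduli (d : 'rV[C]_N) : Prop := forall j, `|d 0 j| = 1.

Definition enphased (d : 'rV[C]_N) (s : 'S_N) : M := diag_mx d *m perm_mx s.

Definition Cop (W : M) (F : M) : M := hadamard F W *m adjmx W.
Definition Dop (W : M) (F : M) : M :=
  W *m adjmx (hadamard (map_mx Num.conj F) W).
(* C_W^{-1}: since C_W(F) W = F o W for unitary W, the inverse of C_W
   (for unitary W with no zero entries) is G |-> (G W) o (1/W) entrywise. *)
Definition Cinv (W : M) (G : M) : M := \matrix_(i, j) ((G *m W) i j / W i j).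
Definition Iop (W : M) (F : M) : M := Cinv W (Dop W F).

Definition eigsp (W : M) (lam : C) : pred M :=
  fun F => Iop W F == lam *: F.

Definition purely_imag (F : M) : Prop := forall i j, complex.Re (F i j) = 0.

Definition Im_eigsp (W : M) (lam : C) (F : M) : Prop :=
  eigsp W lam F /\ purely_imag F.

Definition antihermitian (X : M) : Prop := adjmx X = - X.

Definition cmx (Rm : 'M[R]_N) : M := map_mx (fun r : R => (r%:C)%C) Rm.

Definition feasible (W : M) (X : M) : Prop :=
  exists Rm : 'M[R]_N,
    X = hadamard ('i%C *: cmx Rm) W /\ antihermitian (X *m adjmx W).

Definition realify (F : M) : 'rV[R]_(N * N + N * N) :=
  row_mx (mxvec (map_mx (@complex.Re R) F)) (mxvec (map_mx (@complex.Im R) F)).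

(* P (a real-linear subspace of 'M[C]_N) has real dimension k:
   the image of P under realify is the row space of a k-row matrix
   of full row rank. *)
Definition real_dim (P : M -> Prop) (k : nat) : Prop :=
  exists B : 'M[R]_(k, N * N + N * N),
    row_free B /\
    forall v : 'rV[R]_(N * N + N * N),
      (v <= B)%MS <-> exists2 F, P F & v = realify F.

Definition Phi (A B : M) (X : M) : M := A *m X *m invmx B.

Definition img (f : M -> M) (P : M -> Prop) (X : M) : Prop :=
  exists2 Y, P Y & X = f Y.

(* algebraic multiplicity of lam in the spectrum of I_W (I_W represented by
   its matrix lin_mx acting on 'M[C]_N ~ C^(N*N)) *)
Definition mult_I (W : M) (lam : C) : nat :=
  mup lam (char_poly (lin_mx (Iop W))).

End Defs.

(* Main.v *)
Require Import Defs.
From HB Require Import structures.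
From mathcomp Require Import all_boot all_order all_algebra all_fingroup.
From mathcomp Require Import complex.
From mathcomp Require Import ring.
Import Order.TTheory GRing.Theory Num.Theory.
Local Open Scope ring_scope.
Set Implicit Arguments.
Unset Strict Implicit.
Unset Printing Implicit Defensive.

Definition mt (R : rcfType) (N : nat) (a b : 'I_N -> complex R)
  (s t : 'I_N -> 'I_N) (X : 'M[complex R]_N) : 'M[complex R]_N :=
  \matrix_(i, j) (a i * X (s i) (t j) * b j).

Lemma mtE (R : rcfType) N a b s t X i j :
  @mt R N a b s t X i j = a i * X (s i) (t j) * b j.
Proof. by rewrite mxE. Qed.

Lemma mtM (R : rcfType) N (a b c c' : 'I_N -> complex R) (s t : 'I_N -> 'I_N)
  (r : 'S_N) A B : (forall k, c k * c' k = 1) ->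
  mt a c s r A *m mt c' b r t B = mt a b s t (A *m B).
Proof.
move=> cc; apply/matrixP=> i j; rewrite !mxE big_distrr big_distrl /=.
rewrite [RHS](reindex_inj (@perm_inj _ r)) /=; apply: eq_bigr => k _.
by rewrite !mxE -[RHS]mul1r -(cc k); ring.
Qed.

Lemma mt_adj (R : rcfType) N (a b : 'I_N -> complex R) s t X :
  adjmx (mt a b s t X) = mt (fun i => Num.conj (b i)) (fun j => Num.conj (a j)) t s (adjmx X).
Proof.
apply/matrixP=> i j; rewrite !mxE !rmorphM /=; ring.
Qed.

Lemma mt_comp (R : rcfType) N (a b a' b' : 'I_N -> complex R) s t s' t' X :
  mt a b s t (mt a' b' s' t' X) =
  mt (fun i => a i * a' (s i)) (fun j => b' (t j) * b j) (s' \o s) (t' \o t) X.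
Proof. by apply/matrixP=> i j; rewrite !mxE /= !mulrA. Qed.

Lemma mt_id (R : rcfType) N (X : 'M[complex R]_N) :
  mt (fun _ => 1) (fun _ => 1) id id X = X.
Proof. by apply/matrixP=> i j; rewrite !mxE mul1r mulr1. Qed.

Lemma mt_ext (R : rcfType) N (a b a' b' : 'I_N -> complex R) s t s' t' X :
  a =1 a' -> b =1 b' -> s =1 s' -> t =1 t' -> mt a b s t X = mt a' b' s' t' X.
Proof. by move=> ha hb hs ht; apply/matrixP=> i j; rewrite !mxE ha hb hs ht. Qed.

Lemma mt_scalar1 (R : rcfType) N (a b : 'I_N -> complex R) (s : 'S_N) :
  (forall i, a i * b i = 1) -> mt a b s s 1%:M = 1%:M.
Proof.
move=> ab; apply/matrixP=> i j; rewrite !mxE (inj_eq (@perm_inj _ s)).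
by case: eqP => [->|_]; rewrite ?mulr1 ?ab // mulr0 mul0r.
Qed.

Lemma adjmx1 (R : rcfType) N : adjmx (1%:M : 'M[complex R]_N) = 1%:M.
Proof. by apply/matrixP=> i j; rewrite !mxE eq_sym; case: eqP; rewrite ?conjC1 ?conjC0. Qed.

Lemma mt_had (R : rcfType) N (a b a' b' : 'I_N -> complex R) s t X Y :
  hadamard (mt a b s t X) (mt a' b' s t Y) =
  mt (fun i => a i * a' i) (fun j => b j * b' j) s t (hadamard X Y).
Proof.
apply/matrixP=> i j; rewrite !mxE.
ring.
Qed.

Lemma mt_conj (R : rcfType) N (a b : 'I_N -> complex R) s t X :
  map_mx Num.conj (mt a b s t X) =
  mt (fun i => Num.conj (a i)) (fun j => Num.conj (b j)) s t (map_mx Num.conj X).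
Proof. by apply/matrixP=> i j; rewrite !mxE !rmorphM. Qed.


Lemma Iop_mt (R : rcfType) N (a b : 'I_N -> complex R) (s t : 'S_N) U Y :
  (forall i, a i * Num.conj (a i) = 1) -> (forall i, b i * Num.conj (b i) = 1) ->
  Iop (mt a b s t U) (mt (fun _ => 1) (fun _ => 1) s t Y) =
  mt (fun _ => 1) (fun _ => 1) s t (Iop U Y).
Proof.
move=> ua ub.
have hc : map_mx Num.conj (mt (fun _ => 1) (fun _ => 1) s t Y) =
    mt (fun _ => 1) (fun _ => 1) s t (map_mx Num.conj Y).
  by apply/matrixP=> i j; rewrite !mxE !rmorphM /= conjC1.
rewrite /Iop /Dop hc.
rewrite mt_had mt_adj mtM; last by move=> k; rewrite /= mul1r ub.
rewrite /Cinv mtM; last by move=> k; rewrite /= mul1r mulrC ua.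
apply/matrixP=> i j; rewrite !mxE.
set x := \sum__ _; set y := U _ _.
have a0 : a i != 0 by apply/eqP=> h; have := ua i; rewrite h mul0r => /eqP; rewrite eq_sym oner_eq0.
have b0 : b j != 0 by apply/eqP=> h; have := ub j; rewrite h mul0r => /eqP; rewrite eq_sym oner_eq0.
rewrite !invfM mul1r mulr1; move: (y^-1) => z.
rewrite -[RHS]mul1r -(mulfV a0) -[RHS]mul1r -(mulfV b0); ring.
Qed.

Lemma mt_opp (R : rcfType) N (a b : 'I_N -> complex R) s t Z :
  mt a b s t (- Z) = - mt a b s t Z.
Proof. by apply/matrixP=> i j; rewrite !mxE mulrN mulNr. Qed.

Lemma feasible_mt (R : rcfType) N (a b : 'I_N -> complex R) (s t : 'S_N) W Y :
  (forall i, a i * Num.conj (a i) = 1) -> (forall i, b i * Num.conj (b i) = 1) ->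
  feasible W Y -> feasible (mt a b s t W) (mt a b s t Y).
Proof.
move=> ua ub [Rm [-> ah]].
exists (\matrix_(i, j) Rm (s i) (t j)); split.
  by apply/matrixP=> i j; rewrite !mxE; ring.
move: ah; rewrite /antihermitian => ah.
rewrite mt_adj mtM; last by move=> k; rewrite ub.
rewrite mt_adj ah mt_opp; congr (- _); apply: mt_ext => // i; exact: conjCK.
Qed.

Lemma enph_mt (R : rcfType) N (d : 'rV[complex R]_N) (p : 'S_N) :
  enphased d p = mt (fun i => d 0 i) (fun _ => 1) p (1%g : 'S_N) 1%:M.
Proof.
by apply/matrixP=> i j; rewrite /enphased mul_diag_mx !mxE perm1 mulr1.
Qed.

Lemma perm_mt (R : rcfType) N (p : 'S_N) :
  perm_mx p = mt (fun _ => 1 : complex R) (fun _ => 1) p (1%g : 'S_N) 1%:M.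
Proof. by apply/matrixP=> i j; rewrite !mxE perm1 mulr1 mul1r. Qed.

Lemma inv_mt (R : rcfType) N (d : 'I_N -> complex R) (q : 'S_N) :
  (forall i, d i * Num.conj (d i) = 1) ->
  invmx (mt d (fun _ => 1) q (1%g : 'S_N) 1%:M) =
  mt (fun _ => 1) (fun i => Num.conj (d i)) (1%g : 'S_N) q 1%:M.
Proof.
move=> ud; set T := mt _ _ _ _ _.
have -> : mt (fun _ => 1) (fun i => Num.conj (d i)) (1%g : 'S_N) q 1%:M = adjmx T.
  by rewrite /T mt_adj adjmx1; apply: mt_ext => // i; rewrite conjC1.
have h : T *m adjmx T = 1%:M.
  rewrite /T mt_adj mtM; last by move=> k; rewrite conjC1 mulr1.
  by rewrite adjmx1 mulmx1 mt_scalar1.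
have [Tu _] := mulmx1_unit h.
by rewrite -[RHS](mulKmx Tu) h mulmx1.
Qed.

Lemma Phi_mt (R : rcfType) N (a d : 'I_N -> complex R) (p q : 'S_N) Y :
  (forall i, d i * Num.conj (d i) = 1) ->
  Phi (mt a (fun _ => 1) p (1%g : 'S_N) 1%:M) (mt d (fun _ => 1) q (1%g : 'S_N) 1%:M) Y
  = mt a (fun i => Num.conj (d i)) p q Y.
Proof.
move=> ud; rewrite /Phi inv_mt //.
have -> : Y = mt (fun _ => 1) (fun _ => 1) (1%g : 'S_N) (1%g : 'S_N) Y.
  by apply/matrixP=> i j; rewrite !mxE !perm1 mulr1 mul1r.
rewrite mtM; last by move=> k; rewrite mulr1.
rewrite mtM; last by move=> k; rewrite mulr1.
rewrite mul1mx mulmx1; apply/matrixP=> i j; rewrite !mxE !perm1 mulr1 mul1r //.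
Qed.

Definition unidx N (p : 'I_(N * N)) : 'I_N * 'I_N :=
  enum_val (cast_ord (esym (mxvec_cast N N)) p).

Lemma unidxK N (i j : 'I_N) : unidx (mxvec_index i j) = (i, j).
Proof. by rewrite /unidx /mxvec_index cast_ordK enum_rankK. Qed.

Definition pif N (s t : 'S_N) (p : 'I_(N * N)) : 'I_(N * N) :=
  mxvec_index (s (unidx p).1) (t (unidx p).2).

Lemma pif_inj N (s t : 'S_N) : injective (pif s t).
Proof.
move=> p q; case: (mxvec_indexP p) => i j; case: (mxvec_indexP q) => k l.
rewrite /pif !unidxK /= => /(congr1 (@unidx N)); rewrite !unidxK => -[].
by move=> /perm_inj -> /perm_inj ->.
Qed.

Definition piv N (s t : 'S_N) : 'S_(N * N) := perm (@pif_inj N s t).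

Lemma pivE N (s t : 'S_N) i j : piv s t (mxvec_index i j) = mxvec_index (s i) (t j).
Proof. by rewrite permE /pif unidxK. Qed.

Lemma char_poly_perm (F : fieldType) n (A : 'M[F]_n) (p : 'S_n) :
  char_poly (row_perm p (col_perm p A)) = char_poly A.
Proof.
rewrite /char_poly.
have -> : char_poly_mx (row_perm p (col_perm p A)) = row_perm p (col_perm p (char_poly_mx A)).
  by apply/matrixP=> i j; rewrite /char_poly_mx !mxE (inj_eq perm_inj).
rewrite row_permE col_permE !det_mulmx !det_perm odd_permV mulrCA mulrA.
by rewrite -mulrA -signr_addb addbb expr0 mulr1.
Qed.

Lemma linE (F : fieldType) N (f : 'M[F]_N -> 'M[F]_N) i j k l :
  lin_mx f (mxvec_index i j) (mxvec_index k l) = f (delta_mx i j) k l.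
Proof. by rewrite /lin_mx /lin1_mx mxE /= vec_mx_delta mxvecE. Qed.

Lemma delta_mt (R : rcfType) N (s t : 'S_N) (i j : 'I_N) :
  delta_mx i j = mt (fun _ => 1 : complex R) (fun _ => 1) s t (delta_mx (s i) (t j)).
Proof.
apply/matrixP=> k l; rewrite !mxE mulr1 mul1r.
by rewrite !(inj_eq perm_inj).
Qed.

Lemma multI_mt (R : rcfType) N (a b : 'I_N -> complex R) (s t : 'S_N) U lam :
  (forall i, a i * Num.conj (a i) = 1) -> (forall i, b i * Num.conj (b i) = 1) ->
  mult_I (mt a b s t U) lam = mult_I U lam.
Proof.
move=> ua ub; rewrite /mult_I.
have -> : lin_mx (Iop (mt a b s t U)) =
   row_perm (piv s t) (col_perm (piv s t) (lin_mx (Iop U))).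
  apply/matrixP=> p q; case: (mxvec_indexP p) => i j; case: (mxvec_indexP q) => k l.
  have rc : forall (B : 'M[complex R]_(N * N)) x y,
    row_perm (piv s t) (col_perm (piv s t) B) x y = B (piv s t x) (piv s t y).
    by move=> B x y; rewrite !mxE.
  rewrite rc !pivE !linE (delta_mt R s t i j) Iop_mt // mtE mulr1 mul1r.
  by [].
congr mup; exact: char_poly_perm.
Qed.


Lemma mul_lin1 (F : fieldType) m n (h : 'rV[F]_m -> 'rV[F]_n) :
  (forall u v, h (u + v) = h u + h v) -> (forall c u, h (c *: u) = c *: h u) ->
  forall u, u *m lin1_mx h = h u.
Proof.
move=> hD hZ u.
have h0 : h 0 = 0 by rewrite -(scale0r 0) hZ scale0r.
rewrite [in RHS](row_sum_delta u) (big_morph h hD h0); apply/rowP=> i.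
rewrite mxE summxE; apply: eq_bigr => j _; rewrite hZ !mxE.
by [].
Qed.

Lemma Re_add (R : rcfType) (x y : complex R) : complex.Re (x + y) = complex.Re x + complex.Re y.
Proof. by case: x; case: y. Qed.
Lemma Im_add (R : rcfType) (x y : complex R) : complex.Im (x + y) = complex.Im x + complex.Im y.
Proof. by case: x; case: y. Qed.
Lemma Re_scal (R : rcfType) (r : R) (x : complex R) : complex.Re ((r%:C)%C * x) = r * complex.Re x.
Proof. by case: x => a b /=; ring. Qed.
Lemma Im_scal (R : rcfType) (r : R) (x : complex R) : complex.Im ((r%:C)%C * x) = r * complex.Im x.
Proof. by case: x => a b /=; ring. Qed.

Definition unre (R : rcfType) N (v : 'rV[R]_(N * N + N * N)) : 'M[complex R]_N :=
  \matrix_(i, j) ((vec_mx (lsubmx v) i j) +i* (vec_mx (rsubmx v) i j))%C.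

Lemma realifyK (R : rcfType) N (F : 'M[complex R]_N) : unre (realify F) = F.
Proof.
apply/matrixP=> i j; rewrite /unre /realify mxE row_mxKl row_mxKr !mxvecK !mxE.
by case: (F i j).
Qed.

Lemma unreK (R : rcfType) N (v : 'rV[R]_(N * N + N * N)) : realify (unre v) = v.
Proof.
rewrite /realify.
have -> : map_mx (@complex.Re R) (unre v) = vec_mx (lsubmx v) by apply/matrixP=> i j; rewrite !mxE.
have -> : map_mx (@complex.Im R) (unre v) = vec_mx (rsubmx v) by apply/matrixP=> i j; rewrite !mxE.
by rewrite !vec_mxK hsubmxK.
Qed.

Lemma realifyD (R : rcfType) N (X Y : 'M[complex R]_N) :
  realify (X + Y) = realify X + realify Y.
Proof.
rewrite /realify add_row_mx -!linearD /=; congr (row_mx (mxvec _) (mxvec _));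
  by apply/matrixP=> i j; rewrite !mxE ?Re_add ?Im_add.
Qed.

Lemma realifyZ (R : rcfType) N (r : R) (X : 'M[complex R]_N) :
  realify ((r%:C)%C *: X) = r *: realify X.
Proof.
rewrite /realify scale_row_mx -!linearZ /=; congr (row_mx (mxvec _) (mxvec _));
  by apply/matrixP=> i j; rewrite !mxE ?Re_scal ?Im_scal.
Qed.

Lemma realify_inj (R : rcfType) N : injective (@realify R N).
Proof. by move=> X Y h; rewrite -(realifyK X) h realifyK. Qed.

Lemma real_dim_ext (R : rcfType) N (P Q : 'M[complex R]_N -> Prop) k :
  (forall X, P X <-> Q X) -> real_dim P k -> real_dim Q k.
Proof.
move=> PQ [B [fB hB]]; exists B; split => // v; rewrite hB.
by split=> -[F hF ->]; exists F => //; apply/PQ.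
Qed.

Lemma real_dim_img (R : rcfType) N (f g : 'M[complex R]_N -> 'M[complex R]_N)
  (P : 'M[complex R]_N -> Prop) k :
  (forall X Y, f (X + Y) = f X + f Y) -> (forall r X, f ((r%:C)%C *: X) = (r%:C)%C *: f X) ->
  (forall X Y, g (X + Y) = g X + g Y) -> (forall r X, g ((r%:C)%C *: X) = (r%:C)%C *: g X) ->
  (forall X, f (g X) = X) -> (forall X, g (f X) = X) ->
  real_dim P k -> real_dim (img f P) k.
Proof.
move=> fD fZ gD gZ fg gf [B [fB hB]].
have unD : forall u v : 'rV[R]_(N * N + N * N), unre (u + v) = unre u + unre v.
  by move=> u v; apply: realify_inj; rewrite realifyD !unreK.
have unZ : forall (c : R) (u : 'rV[R]_(N * N + N * N)), unre (c *: u) = (c%:C)%C *: unre u.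
  by move=> c u; apply: realify_inj; rewrite realifyZ !unreK.
pose h v := realify (f (unre v)).
pose h' v := realify (g (unre v)).
have hM : forall u, u *m lin1_mx h = h u.
  apply: mul_lin1 => [u v|c u]; by rewrite /h ?unD ?fD ?realifyD ?unZ ?fZ ?realifyZ.
have hM' : forall u, u *m lin1_mx h' = h' u.
  apply: mul_lin1 => [u v|c u]; by rewrite /h' ?unD ?gD ?realifyD ?unZ ?gZ ?realifyZ.
have MM : lin1_mx h *m lin1_mx h' = 1%:M.
  apply/row_matrixP=> i; rewrite row_mul rowE hM hM'. rewrite /h /h'.
  by rewrite realifyK gf unreK row1.
exists (B *m lin1_mx h); split.
  move/row_freeP: fB => [X hX]; apply/row_freeP; exists (lin1_mx h' *m X).
  by rewrite -mulmxA (mulmxA (lin1_mx h)) MM mul1mx.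
move=> v; split.
  move/submxP=> [D ->]; rewrite mulmxA.
  have /hB [F0 PF0 e] : (D *m B <= B)%MS by exact: submxMl.
  rewrite e hM /h realifyK; exists (f F0) => //; by exists F0.
move=> [F [Y PY ->] ->].
have /hB : (exists2 F, P F & realify Y = realify F) by exists Y.
move=> /submxP [D e]; apply/submxP; exists D.
by rewrite mulmxA -e hM /h realifyK.
Qed.


Lemma mtD (R : rcfType) N (a b : 'I_N -> complex R) s t X Y :
  mt a b s t (X + Y) = mt a b s t X + mt a b s t Y.
Proof. by apply/matrixP=> i j; rewrite !mxE; ring. Qed.

Lemma mtZ (R : rcfType) N (a b : 'I_N -> complex R) s t c X :
  mt a b s t (c *: X) = c *: mt a b s t X.
Proof. by apply/matrixP=> i j; rewrite !mxE; ring. Qed.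

Lemma mt_invK1 (R : rcfType) N (a b : 'I_N -> complex R) (s t : 'S_N) X :
  (forall i, a i * Num.conj (a i) = 1) -> (forall i, b i * Num.conj (b i) = 1) ->
  mt a b s t (mt (fun i => Num.conj (a ((s^-1)%g i))) (fun j => Num.conj (b ((t^-1)%g j)))
     (s^-1)%g (t^-1)%g X) = X.
Proof.
move=> ua ub; rewrite mt_comp -[RHS]mt_id; apply: mt_ext => i /=.
- by rewrite permK ua.
- by rewrite permK mulrC ub.
- exact: permK.
- exact: permK.
Qed.

Lemma mt_invK2 (R : rcfType) N (a b : 'I_N -> complex R) (s t : 'S_N) X :
  (forall i, a i * Num.conj (a i) = 1) -> (forall i, b i * Num.conj (b i) = 1) ->
  mt (fun i => Num.conj (a ((s^-1)%g i))) (fun j => Num.conj (b ((t^-1)%g j)))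
     (s^-1)%g (t^-1)%g (mt a b s t X) = X.
Proof.
move=> ua ub; rewrite mt_comp -[RHS]mt_id; apply: mt_ext => i /=.
- by rewrite mulrC ua.
- by rewrite ub.
- exact: permKV.
- exact: permKV.
Qed.

Lemma unit_conj (R : rcfType) (x : complex R) : `|x| = 1 -> x * Num.conj x = 1.
Proof. by move=> h; rewrite -normCK h expr1n. Qed.

Lemma conj_unit (R : rcfType) (x : complex R) : x * Num.conj x = 1 ->
  Num.conj x * Num.conj (Num.conj x) = 1.
Proof. by rewrite conjCK mulrC. Qed.

Lemma purely_imag_mt (R : rcfType) N (s t : 'I_N -> 'I_N) (Y : 'M[complex R]_N) :
  purely_imag Y -> purely_imag (mt (fun _ => 1) (fun _ => 1) s t Y).
Proof. by move=> h i j; rewrite mtE mul1r mulr1. Qed.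

Unset Implicit Arguments.
Set Strict Implicit.

Theorem corollary3p6 (R : rcfType) (N : nat) (U : 'M[complex R]_N)
  (dS dT : 'rV[complex R]_N) (pS pT : 'S_N) :
  unitary U -> no_zero_entries U ->
  unit_moduli dS -> unit_moduli dT ->
  let S := enphased dS pS in
  let T := enphased dT pT in
  let PiS := perm_mx pS in
  let PiT := perm_mx pT in
  let V := S *m U *m invmx T in
  (forall k : nat, real_dim (feasible U) k <-> real_dim (feasible V) k)
  /\ mult_I U 1 = mult_I V 1
  /\ (forall X, eigsp V 1 X <-> img (Phi PiS PiT) (eigsp U 1) X)
  /\ (forall X, Im_eigsp V 1 X <-> img (Phi PiS PiT) (Im_eigsp U 1) X)
  /\ (forall X, feasible V X <-> img (Phi S T) (feasible U) X).
Proof.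
move=> _ _ udS udT S T PiS PiT V.
pose a i := dS 0 i; pose b i := Num.conj (dT 0 i).
have ua : forall i, a i * Num.conj (a i) = 1 by move=> i; apply: unit_conj.
have ub : forall i, b i * Num.conj (b i) = 1 by move=> i; apply: conj_unit; apply: unit_conj.
pose a' i := Num.conj (a ((pS^-1)%g i)); pose b' j := Num.conj (b ((pT^-1)%g j)).
have ua' : forall i, a' i * Num.conj (a' i) = 1 by move=> i; apply: conj_unit.
have ub' : forall i, b' i * Num.conj (b' i) = 1 by move=> i; apply: conj_unit.
have hPhiST : forall Y, Phi S T Y = mt a b pS pT Y.
  move=> Y; rewrite /S /T !enph_mt Phi_mt //.
  by move=> i; apply: unit_conj.
have hPhiPi : forall Y, Phi PiS PiT Y = mt (fun _ => 1) (fun _ => 1) pS pT Y.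
  move=> Y; rewrite /PiS /PiT !perm_mt Phi_mt; last by move=> i; rewrite conjC1 mulr1.
  by apply: mt_ext => // i; rewrite conjC1.
have hV : V = mt a b pS pT U by rewrite -hPhiST.
have hU : U = mt a' b' (pS^-1)%g (pT^-1)%g V by rewrite hV mt_invK2.
have feasVU : forall X, feasible V X <-> img (mt a b pS pT) (feasible U) X.
  move=> X; split.
    move=> fX; exists (mt a' b' (pS^-1)%g (pT^-1)%g X); last by rewrite mt_invK1.
    by rewrite hU; apply: feasible_mt.
  by move=> [Y fY ->]; rewrite hV; apply: feasible_mt.
have feasUV : forall X, feasible U X <-> img (mt a' b' (pS^-1)%g (pT^-1)%g) (feasible V) X.
  move=> X; split.
    move=> fX; exists (mt a b pS pT X); last by rewrite mt_invK2.
    by rewrite hV; apply: feasible_mt.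
  by move=> [Y fY ->]; rewrite hU; apply: feasible_mt.
pose m1 := mt (fun _ => 1 : complex R) (fun _ => 1) pS pT.
pose m1' := mt (fun _ => 1 : complex R) (fun _ => 1) (pS^-1)%g (pT^-1)%g.
have m1K : forall X, m1 (m1' X) = X.
  move=> X; rewrite /m1 /m1' mt_comp -[RHS]mt_id; apply: mt_ext => i /=;
  by rewrite ?mulr1 ?permK ?permKV.
have m1K' : forall X, m1' (m1 X) = X.
  move=> X; rewrite /m1 /m1' mt_comp -[RHS]mt_id; apply: mt_ext => i /=;
  by rewrite ?mulr1 ?permK ?permKV.
have hI : forall Y, Iop V (m1 Y) = m1 (Iop U Y) by move=> Y; rewrite hV Iop_mt.
have eigVU : forall X, eigsp V 1 X <-> img m1 (eigsp U 1) X.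
  move=> X; rewrite /eigsp /=; split.
    move=> /eqP; rewrite scale1r => h; exists (m1' X); last by rewrite m1K.
    by rewrite /= scale1r; apply/eqP; rewrite -[LHS]m1K' -hI m1K h.
  move=> [Y /eqP hY ->]; rewrite scale1r in hY.
  by apply/eqP; rewrite hI hY scale1r.
split.
  move=> k; split => hk.
    apply: (real_dim_ext (P := img (mt a b pS pT) (feasible U))).
      by move=> X; rewrite feasVU.
    apply: (real_dim_img (f := mt a b pS pT) (g := mt a' b' (pS^-1)%g (pT^-1)%g)) hk.
    + exact: mtD.
    + by move=> r X; rewrite mtZ.
    + exact: mtD.
    + by move=> r X; rewrite mtZ.
    + by move=> X; apply: mt_invK1.
    + by move=> X; apply: mt_invK2.
  apply: (real_dim_ext (P := img (mt a' b' (pS^-1)%g (pT^-1)%g) (feasible V))).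
    by move=> X; rewrite feasUV.
  apply: (real_dim_img (g := mt a b pS pT) (f := mt a' b' (pS^-1)%g (pT^-1)%g)) hk.
  + exact: mtD.
  + by move=> r X; rewrite mtZ.
  + exact: mtD.
  + by move=> r X; rewrite mtZ.
  + by move=> X; apply: mt_invK2.
  + by move=> X; apply: mt_invK1.
split; first by rewrite hV multI_mt.
split.
  move=> X; rewrite eigVU; split => -[Y hY ->]; exists Y => //; by rewrite hPhiPi.
split.
  move=> X; split.
    move=> [/eigVU [Y hY eX] pX]; exists Y; last by rewrite hPhiPi.
    split => //; rewrite -[Y]m1K' -eX; exact: purely_imag_mt.
  move=> [Y [hY pY] ->]; rewrite hPhiPi; split; last exact: purely_imag_mt.
  by apply/eigVU; exists Y.
move=> X; rewrite feasVU; split => -[Y hY ->]; exists Y => //; by rewrite hPhiST.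
Qed.
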